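(* For every $X\in\{\mathsf{T},\mathsf{S}\}^*$, the sequence $X\mathsf{S}$ is not transitive; that is, there exist taxonomies and an initial preference formula for which the strict relation $\succ_{X\mathsf{S}}$ is not transitive.
   Context: Fix attribute–taxonomy pairs $A_1{:}T_1,\dots,A_d{:}T_d$ with distinct attribute names, where each taxonomy $T_i=(V_i,\le_{V_i})$ is a poset. A t-tuple over a t-schema $S\subseteq\{A_1{:}T_1,\dots,A_d{:}T_d\}$ maps each $A_i$ in $S$ to a value of $V_i$; $\mathcal{D}$ is the set of all t-tuples over all such t-schemas. A preference relation is a binary relation $\succeq$ on $\mathcal{D}$; its strict part is $t_1\succ t_2$ iff $t_1\succeq t_2$ and not $t_2\succeq t_1$. Preferences are given by a formula $F(x,y)=\bigvee_i P_i(x,y)$, a disjunction of statements; each statement $P_i$ is a disjunction of clauses, each clause a satisfiable conjunction of atoms of the forms $x[A_i]\le_{V_i} v$, $x[A_i]\not\le_{V_i} v$, $y[A_i]\le_{V_i} v$, $y[A_i]\not\le_{V_i} v$; the formula induces $t_1\succeq t_2\iff F(t_1,t_2)$. Operator $\mathsf{T}$ maps a formula to one inducing the transitive closure over $\mathcal{D}$ of the induced relation. Operator $\mathsf{S}$ (specificity-based refinement): repeat rounds; in a round, for each statement $P_i$ let $\mathrm{Impl}(P_i)$ be the set of statements $P_j$ such that $P_j(t_2,t_1)\Rightarrow P_i(t_1,t_2)$ for all $t_1,t_2\in\mathcal{D}$ but not conversely; simultaneously replace every $P_i$ with nonempty $\mathrm{Impl}(P_i)$ by $P_i(x,y)\wedge\bigwedge_{P_j\in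 \mathrm{Impl}(P_i)}\neg P_j(y,x)$; stop when no $\mathrm{Impl}$ set is nonempty. After each operator, contradictory clauses and subsumed statements are removed. For $X\in\{\mathsf{T},\mathsf{S}\}^*$, $\succeq_X$ (strict part $\succ_X$) is the relation induced by applying the operators of $X$ in order to the initial formula. A sequence $X$ is transitive if $\succ_X$ is transitive for every initial preference formula. *)

(* Defs.v *)
From Stdlib Require List.
From mathcomp Require Import all_boot.
Set Implicit Arguments. Unset Strict Implicit. Unset Printing Implicit Defensive.

Record Taxonomy := {
  tcar :> Type;
  tle : tcar -> tcar -> Prop;
  tle_refl : forall a, tle a a;
  tle_antisym : forall a b, tle a b -> tle b a -> a = b;
  tle_trans : forall a b c, tle a b -> tle b c -> tle a c }.

Section Prefs.
Variable d : nat.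
(* Attribute A_i : T_i for i < d (attribute names are the indices, hence distinct). *)
Variable tax : 'I_d -> Taxonomy.

(* The domain D: t-tuples over all t-schemas S ⊆ {A_1:T_1,...,A_d:T_d};
   [t i = None] means A_i is not in the schema of t. *)
Definition ttuple := forall i : 'I_d, option (tax i).

Inductive atom :=
| AxLe  (i : 'I_d) (v : tax i)
| AxNLe (i : 'I_d) (v : tax i)
| AyLe  (i : 'I_d) (v : tax i)
| AyNLe (i : 'I_d) (v : tax i).

Definition clause := list atom.        (* conjunction *)
Definition statement := list clause.   (* disjunction of clauses *)
Definition formula := list statement.  (* disjunction of statements *)

Definition val_le (i : 'I_d) (o : option (tax i)) (v : tax i) : Prop :=
  match o with Some u => tle u v | None => False end.
Definition val_nle (i : 'I_d) (o : option (tax i)) (v : tax i) : Prop :=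
  match o with Some u => ~ tle u v | None => False end.

Definition atom_sem (a : atom) (x y : ttuple) : Prop :=
  match a with
  | AxLe i v => val_le (x i) v
  | AxNLe i v => val_nle (x i) v
  | AyLe i v => val_le (y i) v
  | AyNLe i v => val_nle (y i) v
  end.

Definition clause_sem (c : clause) (x y : ttuple) : Prop :=
  forall a, List.In a c -> atom_sem a x y.
Definition clause_satisfiable (c : clause) : Prop :=
  exists x y, clause_sem c x y.
Definition statement_sem (s : statement) (x y : ttuple) : Prop :=
  exists c, List.In c s /\ clause_sem c x y.

Definition wf_formula (F : formula) : Prop :=
  forall s c, List.In s F -> List.In c s -> clause_satisfiable c.

Definition srel := ttuple -> ttuple -> Prop.
Definition sform := list srel.

Definition formula_sem (F : formula) : sform := map statement_sem F.

Definition induced (L : sform) : srel := fun x y => exists P, List.In P L /\ P x y.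
Definition strict_part (R : srel) : srel := fun x y => R x y /\ ~ R y x.
Definition rtransitive (R : srel) : Prop :=
  forall a b c, R a b -> R b c -> R a c.

Definition rimplies (P Q : srel) : Prop := forall x y, P x y -> Q x y.

Definition srel0 : srel := fun _ _ => False.

Definition no_subsumed (G : sform) : Prop :=
  forall i j, i < size G -> j < size G -> i <> j ->
    ~ rimplies (nth srel0 G i) (nth srel0 G j).

(* Removal of subsumed statements (and of contradictory clauses, which is
   semantically the identity): G keeps statements of L, every statement of L
   is subsumed by some kept one, and no kept statement is subsumed by another. *)
Definition reduce (L G : sform) : Prop :=
  (forall P, List.In P G -> List.In P L) /\
  (forall P, List.In P L -> exists Q, List.In Q G /\ rimplies P Q) /\
  no_subsumed G.

Definition compose (P Q : srel) : srel := fun x y => exists z, P x z /\ Q z y.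

Inductive chain (L : sform) : srel -> Prop :=
| chain_base P : List.In P L -> chain L P
| chain_comp P Q : chain L P -> List.In Q L -> chain L (compose P Q).

Definition T_step (L G : sform) : Prop :=
  (forall P, List.In P G -> chain L P) /\
  (forall P, chain L P -> exists Q, List.In Q G /\ rimplies P Q) /\
  no_subsumed G.

Definition Impl (L : sform) (i j : nat) : Prop :=
  let Pi := nth srel0 L i in let Pj := nth srel0 L j in
  (forall t1 t2, Pj t2 t1 -> Pi t1 t2) /\ ~ (forall t1 t2, Pi t1 t2 -> Pj t2 t1).

Definition S_round (L : sform) : sform :=
  [seq (fun x y => nth srel0 L i x y /\
          forall j, j < size L -> Impl L i j -> ~ nth srel0 L j y x)
   | i <- iota 0 (size L)].

Definition no_Impl (L : sform) : Prop :=
  forall i j, i < size L -> j < size L -> ~ Impl L i j.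

Definition S_step (L G : sform) : Prop :=
  exists n, no_Impl (iter n S_round L) /\ reduce (iter n S_round L) G.

Inductive op := OpT | OpS.

Definition op_step (o : op) : sform -> sform -> Prop :=
  match o with OpT => T_step | OpS => S_step end.

(* [outcome X L G]: G is a formula obtained by applying the operators of X,
   in order (leftmost first), to L. *)
Fixpoint outcome (X : list op) (L G : sform) : Prop :=
  match X with
  | [::] => G = L
  | o :: X' => exists M, op_step o L M /\ outcome X' M G
  end.

End Prefs.

(* Main.v *)
Require Import Defs.
From mathcomp Require Import all_boot.
From Stdlib Require List.
From mathcomp Require Import zify.
From Stdlib Require Import Lia.
Set Implicit Arguments. Unset Strict Implicit. Unset Printing Implicit Defensive.

Inductive E3 := eA | eB | eC.
Definition e3eq (a b : E3) : bool :=
  match a, b with eA, eA | eB, eB | eC, eC => true | _, _ => false end.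
Lemma e3eqP a b : e3eq a b = true <-> a = b.
Proof. by case: a; case: b. Qed.

Definition Tx : Taxonomy :=
  {| tcar := E3; tle := fun a b => a = b;
     tle_refl := fun a => erefl a;
     tle_antisym := fun a b h _ => h;
     tle_trans := fun a b c h1 h2 => eq_trans h1 h2 |}.
Definition tx : 'I_1 -> Taxonomy := fun _ => Tx.

Definition Dom := option E3.
Definition BR := Dom -> Dom -> bool.
Definition TT := ttuple tx.
Definition SR := srel tx.
Definition bsem (b : BR) : SR := fun x y => b (x ord0) (y ord0).
Definition mk (a : Dom) : TT := fun _ => a.
Notation s0 := (@srel0 1 tx).
Definition eqv (P Q : SR) := forall x y, P x y <-> Q x y.

Definition dom : seq Dom := [:: None; Some eA; Some eB; Some eC].
Lemma all_dom (p : Dom -> bool) : all p dom -> forall a, p a.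
Proof. rewrite /dom /=; case/and5P => h1 h2 h3 h4 _ [[]|] //. Qed.
Lemma all_domI (p : Dom -> bool) : (forall a, p a) -> all p dom.
Proof. by move=> H; rewrite /= !H. Qed.
Lemma has_dom (p : Dom -> bool) : has p dom <-> exists a, p a.
Proof.
split.
- rewrite /=.
  case E1: (p None); first by exists None.
  case E2: (p (Some eA)); first by exists (Some eA).
  case E3: (p (Some eB)); first by exists (Some eB).
  case E4: (p (Some eC)); first by exists (Some eC).
  by [].
- by case=> [[[]|] h]; rewrite /= h ?orbT.
Qed.

Definition subb (b1 b2 : BR) : bool := all (fun a => all (fun c => ~~ b1 a c || b2 a c) dom) dom.
Definition eqvb b1 b2 := subb b1 b2 && subb b2 b1.
Definition compb (b1 b2 : BR) : BR := fun a c => has (fun z => b1 a z && b2 z c) dom.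
Definition invb (b : BR) : BR := fun a c => b c a.
Definition bimpl (bi bj : BR) : bool := subb (invb bj) bi && ~~ subb bi (invb bj).
Definition fS0 (K : seq BR) (b : BR) : BR :=
  fun a c => b a c && all (fun b2 => ~~ (bimpl b b2 && b2 c a)) K.
Definition idx (a : Dom) : nat :=
  match a with None => 0 | Some eA => 1 | Some eB => 2 | Some eC => 3 end.
Definition tab (b : BR) : BR :=
  let v := flatten (map (fun a => map (b a) dom) dom) in
  fun a c => nth false v (4 * idx a + idx c).
Lemma tab_eq b a c : tab b a c = b a c.
Proof. by case: a => [[]|]; case: c => [[]|]. Qed.
Definition fS (K : seq BR) (b : BR) : BR := tab (fS0 K b).

Lemma subbP b1 b2 : subb b1 b2 <-> rimplies (bsem b1) (bsem b2).
Proof.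
split.
- move=> H x y; rewrite /bsem => h.
  have := all_dom H (x ord0) => /all_dom /(_ (y ord0)).
  by rewrite h.
- move=> H; apply: all_domI => a; apply: all_domI => c.
  case E: (b1 a c) => //=. exact: (H (mk a) (mk c) E).
Qed.

Lemma eqvbP b1 b2 : eqvb b1 b2 -> eqv (bsem b1) (bsem b2).
Proof. by case/andP => /subbP h1 /subbP h2 x y; split; [apply h1|apply h2]. Qed.

Lemma compP b1 b2 : eqv (compose (bsem b1) (bsem b2)) (bsem (compb b1 b2)).
Proof.
move=> x y; split.
- case=> z [h1 h2]; rewrite /bsem /compb; apply/has_dom; exists (z ord0).
  by rewrite h1 h2.
- rewrite /bsem /compb => /has_dom [a /andP [h1 h2]].
  by exists (mk a).
Qed.

Lemma compose_eqv P P' Q Q' : eqv P P' -> eqv Q Q' -> eqv (compose P Q) (compose P' Q').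
Proof.
move=> h1 h2 x y; split; case=> z [a b]; exists z; split;
  by [apply/h1 | apply/h2].
Qed.

Lemma Impl_sem (L : sform tx) i j bi bj :
  eqv (nth s0 L i) (bsem bi) -> eqv (nth s0 L j) (bsem bj) ->
  (Impl L i j <-> bimpl bi bj).
Proof.
move=> hi hj; rewrite /Impl /bimpl.
have e1 : (forall t1 t2, nth s0 L j t2 t1 -> nth s0 L i t1 t2) <-> subb (invb bj) bi.
  rewrite subbP; split=> H x y.
  - by move=> h; apply/hi; apply: H; apply/hj.
  - by move=> h; apply/hi; apply: H; apply/hj.
have e2 : (forall t1 t2, nth s0 L i t1 t2 -> nth s0 L j t2 t1) <-> subb bi (invb bj).
  rewrite subbP; split=> H x y.
  - by move=> h; apply/hj; apply: H; apply/hi.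
  - by move=> h; apply/hj; apply: H; apply/hi.
rewrite e1 e2; split.
- by case=> -> /negP ->.
- by case/andP=> -> /negP.
Qed.

Lemma In_nth T (x0 : T) (P : T) s : List.In P s -> exists i, i < size s /\ nth x0 s i = P.
Proof.
elim: s => [|a s IH] //= [->|h]; first by exists 0.
by case: (IH h) => i [hi <-]; exists i.+1.
Qed.
Lemma nth_In T (x0 : T) s i : i < size s -> List.In (nth x0 s i) s.
Proof. by elim: s i => [|a s IH] [|i] //= h; [left|right; apply: IH]. Qed.
Lemma allIn T (p : T -> bool) s : all p s -> forall x, List.In x s -> p x.
Proof. by elim: s => [|a s IH] //= /andP [h1 h2] x [<-|h]; [|apply: IH]. Qed.
Lemma hasIn T (p : T -> bool) s : has p s -> exists x, List.In x s /\ p x.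
Proof.
elim: s => [|a s IH] //= /orP [h|h]; first by exists a; split; [left|].
by case: (IH h) => x [h1 h2]; exists x; split; [right|].
Qed.
Lemma allI T (p : T -> bool) s : (forall x, List.In x s -> p x) -> all p s.
Proof. elim: s => [|a s IH] //= H; rewrite H /=; [apply: IH => x h; apply: H; by right | by left]. Qed.
Lemma In_map T1 T2 (f : T1 -> T2) s y : List.In y (map f s) <-> exists x, List.In x s /\ y = f x.
Proof.
elim: s y => [|a s IH] y /=; first by split=> // [[x []]].
split.
- case=> [<-|/IH [x [h ->]]]; first by exists a; split; [left|].
  by exists x; split; [right|].
- case=> x [[<-|h] ->]; [by left | right; apply/IH; by exists x].
Qed.
Lemma In_iota m n x : List.In x (iota m n) <-> m <= x < m + n.
Proof.
elim: n m => [|n IH] m /=; first by split=> //; lia.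
rewrite IH; split.
- case=> [<-|/andP [h1 h2]]; lia.
- move=> h; case: (eqVneq m x) => [->|ne]; [by left|right]; lia.
Qed.

Definition match_set (L : sform tx) (K : seq BR) : Prop :=
  (forall P, List.In P L -> exists b, List.In b K /\ eqv P (bsem b)) /\
  (forall b, List.In b K -> exists P, List.In P L /\ eqv P (bsem b)).

Definition newf (L : sform tx) (i : nat) : SR :=
  fun x y => nth s0 L i x y /\ forall j, j < size L -> Impl L i j -> ~ nth s0 L j y x.

Lemma S_round_eq L : S_round L = map (newf L) (iota 0 (size L)).
Proof. by []. Qed.

Lemma newf_sem L K i b : match_set L K -> i < size L -> eqv (nth s0 L i) (bsem b) ->
  eqv (newf L i) (bsem (fS K b)).
Proof.
move=> [m1 m2] hi hb x y; rewrite /newf /bsem /fS tab_eq /fS0; split.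
- case=> /hb h1 h2; rewrite /bsem in h1; rewrite h1 /=.
  apply: allI => b2 hb2; apply/negP => /andP [himp hyx].
  case: (m2 b2 hb2) => P [hP eP]; case: (In_nth s0 hP) => j [hj ej].
  rewrite -ej in eP.
  apply: (h2 j hj); first by apply/(Impl_sem hb eP).
  by apply/eP.
- case/andP=> h1 h2; split; first by apply/hb.
  move=> j hj himp hyx.
  case: (m1 _ (nth_In s0 hj)) => b2 [hb2 eb2].
  have hbi := proj1 (Impl_sem hb eb2) himp.
  have := allIn h2 hb2; rewrite hbi /=.
  by move/eb2: hyx; rewrite /bsem => ->.
Qed.

Lemma Sround_match L K : match_set L K -> match_set (S_round L) (map (fS K) K).
Proof.
move=> m; have [m1 m2] := m; rewrite S_round_eq; split.
- move=> P /In_map [i [/In_iota hi ->]].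
  have hi' : i < size L by lia.
  case: (m1 _ (nth_In s0 hi')) => b [hb eb].
  exists (fS K b); split; first by apply/In_map; exists b.
  exact: newf_sem.
- move=> b' /In_map [b [hb ->]].
  case: (m2 b hb) => P [hP eP]; case: (In_nth s0 hP) => i [hi ei].
  exists (newf L i); split; first by apply/In_map; exists i; split=> //; apply/In_iota; lia.
  by apply: newf_sem => //; rewrite ei.
Qed.

Definition noimplb (K : seq BR) : bool := all (fun b1 => all (fun b2 => ~~ bimpl b1 b2) K) K.

Lemma match_map L K g : match_set L (map g K) -> (forall b, List.In b K -> eqv (bsem (g b)) (bsem b)) ->
  match_set L K.
Proof.
move=> [m1 m2] H; split.
- move=> P /m1 [b' [/In_map [b [hb ->]] e]]; exists b; split=> // x y.
  by rewrite e H.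
- move=> b hb; case: (m2 (g b)); first by apply/In_map; exists b.
  move=> P [hP e]; exists P; split=> // x y; by rewrite e H.
Qed.

Lemma Sround_fix L K : match_set L K -> noimplb K -> match_set (S_round L) K.
Proof.
move=> m hK; apply: (match_map (g := fS K)); first exact: Sround_match.
move=> b hb x y; rewrite /bsem /fS tab_eq /fS0.
have := allIn hK hb => h.
have -> : all (fun b2 => ~~ (bimpl b b2 && b2 (y ord0) (x ord0))) K.
  apply: allI => b2 hb2; have := allIn h hb2; by case: (bimpl b b2).
by rewrite andbT.
Qed.

Definition iterK n K := iter n (fun K => map (fS K) K) K.

Lemma iter_stab L K m : match_set L K -> noimplb (iterK m K) ->
  forall n, match_set (iter n (@S_round 1 tx) L) (iterK (minn n m) K).
Proof.
move=> hL hm; elim=> [|n IH]; first by rewrite min0n.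
case: (ltnP n m) => h.
- have -> : minn n.+1 m = n.+1 by lia.
  have e : minn n m = n by lia.
  rewrite e in IH. exact: Sround_match.
- have -> : minn n.+1 m = m by lia.
  have e : minn n m = m by lia.
  rewrite e in IH; exact: Sround_fix.
Qed.

Lemma noImpl_b L K : match_set L K -> no_Impl L -> noimplb K.
Proof.
move=> [m1 m2] H; apply: allI => b1 h1; apply: allI => b2 h2.
apply/negP => hi.
case: (m2 _ h1) => P1 [hP1 e1]; case: (In_nth s0 hP1) => i [hi1 ei].
case: (m2 _ h2) => P2 [hP2 e2]; case: (In_nth s0 hP2) => j [hj2 ej].
rewrite -ei in e1; rewrite -ej in e2.
apply: (H i j hi1 hj2); exact/(Impl_sem e1 e2).
Qed.

Lemma b_noImpl L K : match_set L K -> noimplb K -> no_Impl L.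
Proof.
move=> [m1 m2] H i j hi hj himp.
case: (m1 _ (nth_In s0 hi)) => b1 [h1 e1].
case: (m1 _ (nth_In s0 hj)) => b2 [h2 e2].
have := allIn (allIn H h1) h2; by rewrite (proj1 (Impl_sem e1 e2) himp).
Qed.

Lemma same_pos (G : sform tx) Q Q' : no_subsumed G -> List.In Q G -> List.In Q' G ->
  rimplies Q Q' -> Q = Q'.
Proof.
move=> H hQ hQ' r; case: (In_nth s0 hQ) => i [hi ei]; case: (In_nth s0 hQ') => j [hj ej].
case: (eqVneq i j) => [eij|nij]; first by rewrite -ei -ej eij.
exfalso; apply: (H i j hi hj); last by rewrite ei ej.
by move=> e; rewrite e eqxx in nij.
Qed.

Definition antib (K : seq BR) := all (fun b1 => all (fun b2 => ~~ subb b1 b2 || subb b2 b1) K) K.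

Lemma select (G : sform tx) K :
  (forall Q, List.In Q G -> exists b, List.In b K /\ rimplies Q (bsem b)) ->
  (forall b, List.In b K -> exists Q, List.In Q G /\ rimplies (bsem b) Q) ->
  no_subsumed G -> antib K -> match_set G K.
Proof.
move=> h1 h2 ns ak; split.
- move=> Q hQ; case: (h1 Q hQ) => b [hb r1]; case: (h2 b hb) => Q' [hQ' r2].
  have e : Q = Q' by apply: (same_pos ns hQ hQ') => x y /r1 /r2.
  subst Q'; exists b; split=> // x y; split; [exact: r1 | exact: r2].
- move=> b hb; case: (h2 b hb) => Q [hQ r2]; case: (h1 Q hQ) => b' [hb' r1].
  have s1 : subb b b' by apply/subbP => x y /r2 /r1.
  have s2 : subb b' b by have := allIn (allIn ak hb) hb'; rewrite s1.
  exists Q; split=> // x y; split; [move/r1; exact: (proj1 (subbP _ _) s2) | exact: r2].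
Qed.

Definition coverb (K K' : seq BR) := all (fun b => has (fun b' => subb b b') K') K.
Definition closb (K K' : seq BR) :=
  all (fun b' => all (fun b => has (fun b'' => subb (compb b' b) b'') K') K) K'.

Lemma chain_bound (L : sform tx) K K' P : match_set L K -> coverb K K' -> closb K K' -> chain L P ->
  exists b', List.In b' K' /\ rimplies P (bsem b').
Proof.
move=> [m1 m2] hc hcl; elim=> [Q hQ | P0 Q _ [b' [hb' r]] hQ].
- case: (m1 Q hQ) => b [hb e]; case: (hasIn (allIn hc hb)) => b' [hb' s].
  exists b'; split=> // x y /e h; exact: (proj1 (subbP _ _) s).
- case: (m1 Q hQ) => b [hb e]; case: (hasIn (allIn (allIn hcl hb') hb)) => b'' [hb'' s].
  exists b''; split=> // x y h; apply: (proj1 (subbP _ _) s); apply/compP.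
  case: h => z [h1 h2]; exists z; split; [exact: r | exact/e].
Qed.

Lemma word_chain (L : sform tx) K ks : match_set L K -> (forall k, List.In k ks -> List.In k K) ->
  forall C b, chain L C -> eqv C (bsem b) -> exists C', chain L C' /\ eqv C' (bsem (foldl compb b ks)).
Proof.
move=> [m1 m2]; elim: ks => [|k ks IH] hks C b hC e /=; first by exists C.
case: (m2 k (hks k (or_introl erefl))) => Q [hQ eQ].
apply: (IH _ (compose C Q) (compb b k)).
- by move=> k' h; apply: hks; right.
- exact: chain_comp.
- move=> x y; split=> h.
  + apply/compP; exact/(compose_eqv e eQ).
  + apply/(compose_eqv e eQ); exact/compP.
Qed.

Definition wordsOK (K K' : seq BR) := forall b', List.In b' K' -> exists k ks,
  List.In k K /\ (forall k', List.In k' ks -> List.In k' K) /\ eqvb (foldl compb k ks) b'.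

Lemma words_chain (L : sform tx) K K' : match_set L K -> wordsOK K K' ->
  forall b', List.In b' K' -> exists C, chain L C /\ eqv C (bsem b').
Proof.
move=> m hw b' hb'; case: (hw b' hb') => k [ks [hk [hks he]]].
have [m1 m2] := m.
case: (m2 k hk) => P [hP eP].
case: (word_chain m hks (chain_base hP) eP) => C [hC eC].
exists C; split=> // x y; rewrite eC; exact: eqvbP.
Qed.

Definition bdef : BR := fun _ _ => false.

Lemma build (A : Type) (Pr : A -> Prop) (K' : seq BR) (R : A -> BR -> Prop) (a0 : A) :
  (forall b, List.In b K' -> exists a, Pr a /\ R a b) ->
  exists G : seq A, size G = size K' /\
    forall i, i < size K' -> Pr (nth a0 G i) /\ R (nth a0 G i) (nth bdef K' i).
Proof.
elim: K' => [|b K' IH] H; first by exists [::].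
case: (H b (or_introl erefl)) => a [ha ra].
case: IH => [b' h|G [hs hG]]; first by apply: H; right.
exists (a :: G); split; first by rewrite /= hs.
by case=> [|i] //= hi; apply: hG.
Qed.

Definition santib (K : seq BR) :=
  all (fun i => all (fun j => (i == j) || ~~ subb (nth bdef K i) (nth bdef K j))
     (iota 0 (size K))) (iota 0 (size K)).

Lemma santiP K i j : santib K -> i < size K -> j < size K -> i <> j ->
  ~~ subb (nth bdef K i) (nth bdef K j).
Proof.
move=> H hi hj nij.
have := allIn (allIn H (proj2 (In_iota _ _ _) (ltac:(lia) : 0 <= i < 0 + size K)))
  (proj2 (In_iota _ _ _) (ltac:(lia) : 0 <= j < 0 + size K)).
by case: eqP.
Qed.

Lemma built_nosub (G : sform tx) K : size G = size K -> santib K ->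
  (forall i, i < size K -> eqv (nth s0 G i) (bsem (nth bdef K i))) -> no_subsumed G.
Proof.
move=> hs hsa hG i j hi hj nij r; rewrite hs in hi hj.
move/negP: (santiP hsa hi hj nij); apply; apply/subbP => x y.
move=> h; apply: (proj1 (hG j hj x y)); apply: r; exact: (proj2 (hG i hi x y) h).
Qed.

Lemma T_lemma (L : sform tx) K K' : match_set L K -> coverb K K' -> closb K K' -> wordsOK K K' ->
  antib K' -> santib K' ->
  (exists G, T_step L G) /\ (forall G, T_step L G -> match_set G K').
Proof.
move=> m hc hcl hw ha hsa; split.
- case: (build (Pr := chain L) (R := fun C b => eqv C (bsem b)) s0 (words_chain m hw)) => G [hs hG].
  exists G; split; [|split].
  + move=> P hP; case: (In_nth s0 hP) => i [hi <-]; rewrite hs in hi; exact: (proj1 (hG i hi)).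
  + move=> P hP; case: (chain_bound m hc hcl hP) => b' [hb' r].
    case: (In_nth bdef hb') => i [hi ei].
    exists (nth s0 G i); split; first by apply: nth_In; rewrite hs.
    move=> x y /r; rewrite -ei => h; exact/(proj2 (hG i hi)).
  + apply: (built_nosub hs hsa) => i hi; exact: (proj2 (hG i hi)).
- move=> G [g1 [g2 g3]]; apply: select => //.
  + move=> Q hQ; exact: (chain_bound m hc hcl (g1 Q hQ)).
  + move=> b hb; case: (words_chain m hw hb) => C [hC eC].
    case: (g2 C hC) => Q [hQ r]; exists Q; split=> // x y /eC; exact: r.
Qed.

Definition eqcovb (K1 K2 : seq BR) := all (fun b2 => has (fun b => eqvb b b2) K1) K2.

Lemma reduce_lemma (L' : sform tx) K1 K2 : match_set L' K1 -> coverb K1 K2 -> eqcovb K1 K2 ->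
  antib K2 -> santib K2 ->
  (exists G, reduce L' G) /\ (forall G, reduce L' G -> match_set G K2).
Proof.
move=> [m1 m2] hc he ha hsa.
have hb2 : forall b2, List.In b2 K2 -> exists P, List.In P L' /\ eqv P (bsem b2).
  move=> b2 h; case: (hasIn (allIn he h)) => b [hb e].
  case: (m2 b hb) => P [hP eP]; exists P; split=> // x y; rewrite eP; exact: eqvbP.
split.
- case: (build (Pr := fun P => List.In P L') (R := fun C b => eqv C (bsem b)) s0 hb2) => G [hs hG].
  exists G; split; [|split].
  + move=> P hP; case: (In_nth s0 hP) => i [hi <-]; rewrite hs in hi; exact: (proj1 (hG i hi)).
  + move=> P hP; case: (m1 P hP) => b [hb e].
    case: (hasIn (allIn hc hb)) => b2 [h2 s].
    case: (In_nth bdef h2) => i [hi ei].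
    exists (nth s0 G i); split; first by apply: nth_In; rewrite hs.
    move=> x y /e /(proj1 (subbP _ _) s); rewrite -ei => h; exact/(proj2 (hG i hi)).
  + apply: (built_nosub hs hsa) => i hi; exact: (proj2 (hG i hi)).
- move=> G [g1 [g2 g3]]; apply: select => //.
  + move=> Q hQ; case: (m1 Q (g1 Q hQ)) => b [hb e].
    case: (hasIn (allIn hc hb)) => b2 [h2 s].
    exists b2; split=> // x y /e; exact: (proj1 (subbP _ _) s).
  + move=> b hb; case: (hb2 b hb) => P [hP eP].
    case: (g2 P hP) => Q [hQ r]; exists Q; split=> // x y /eP; exact: r.
Qed.

Lemma S_lemma (L : sform tx) K m K2 : match_set L K -> noimplb (iterK m K) ->
  (forall n, n < m -> ~~ noimplb (iterK n K)) ->
  coverb (iterK m K) K2 -> eqcovb (iterK m K) K2 -> antib K2 -> santib K2 ->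
  (exists G, S_step L G) /\ (forall G, S_step L G -> match_set G K2).
Proof.
move=> hL hm hlt hc he ha hsa; split.
- have hi := iter_stab hL hm m; rewrite minnn in hi.
  case: (proj1 (reduce_lemma hi hc he ha hsa)) => G hG.
  exists G, m; split=> //; exact: b_noImpl hi hm.
- move=> G [n [hn hr]].
  have hi := iter_stab hL hm n.
  have hb := noImpl_b hi hn.
  case: (ltnP n m) => h.
  + have e : minn n m = n by lia.
    by rewrite e in hb; move: (hlt n h); rewrite hb.
  + have e : minn n m = m by lia.
    rewrite e in hi; exact: (proj2 (reduce_lemma hi hc he ha hsa) G hr).
Qed.

Definition rb (r : seq (E3 * E3)) : BR := fun a c =>
  match a, c with
  | Some x, Some y => has (fun p => e3eq p.1 x && e3eq p.2 y) r
  | _, _ => false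
  end.

Definition Mp : seq (seq (E3 * E3)) :=
 [:: [:: (eB,eA); (eB,eC); (eC,eA); (eC,eC)];
     [:: (eA,eB); (eC,eB)];
     [:: (eB,eB); (eC,eB)];
     [:: (eB,eB); (eC,eC)];
     [:: (eB,eC); (eC,eB)];
     [:: (eA,eA); (eA,eC); (eC,eA); (eC,eC)] ].
Definition Np : seq (seq (E3 * E3)) :=
 [:: [:: (eA,eA); (eC,eA)];
     [:: (eA,eB); (eC,eB)];
     [:: (eB,eB); (eC,eB)];
     [:: (eB,eB); (eC,eC)];
     [:: (eB,eC); (eC,eB)];
     [:: (eC,eA); (eC,eC)] ].
Definition MK := map rb Mp.
Definition NK := map rb Np.

Definition mkst (r : seq (E3 * E3)) : statement tx :=
  map (fun p => [:: @AxLe 1 tx ord0 p.1; @AyLe 1 tx ord0 p.2]) r.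
Definition F : formula tx := map mkst Mp.

Lemma clause_two (p : E3 * E3) (x y : TT) :
  clause_sem [:: @AxLe 1 tx ord0 p.1; @AyLe 1 tx ord0 p.2] x y <->
  x ord0 = Some p.1 /\ y ord0 = Some p.2.
Proof.
split.
- move=> H; have h1 := H _ (or_introl erefl); have h2 := H _ (or_intror (or_introl erefl)).
  move: h1 h2; rewrite /=; case: (x ord0) => [u|] //; case: (y ord0) => [v|] //= -> -> //.
- case=> e1 e2 a [<-|[<-|[]]]; rewrite /= ?e1 ?e2 //.
Qed.

Lemma mkst_sem r : eqv (statement_sem (mkst r)) (bsem (rb r)).
Proof.
move=> x y; rewrite /bsem; elim: r => [|p r IH].
- split; first by case=> c [].
  by case: (x ord0) => [?|]; case: (y ord0) => [?|].
- split.
  + case=> c [[<-|hc] hs].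
    * case/clause_two: hs => -> -> /=.
      by case: p => a b /=; rewrite (proj2 (e3eqP a a) erefl) (proj2 (e3eqP b b) erefl).
    * have : bsem (rb r) x y by apply/IH; exists c.
      rewrite /bsem /=; case: (x ord0) => [u|] //; case: (y ord0) => [v|] //= ->; by rewrite orbT.
  + case Ex: (x ord0) => [u|]; case Ey: (y ord0) => [v|] //=.
    case/orP.
    * case/andP => /e3eqP e1 /e3eqP e2.
      exists [:: @AxLe 1 tx ord0 p.1; @AyLe 1 tx ord0 p.2]; split; first by left.
      by apply/clause_two; rewrite Ex Ey e1 e2.
    * move=> h.
      have : rb r (x ord0) (y ord0) by rewrite Ex Ey.
      case/IH => c [hc hs]; exists c; split=> //; by right.
Qed.

Lemma wfF : wf_formula F.
Proof.
move=> s c /In_map [r [_ ->]] /In_map [p [_ ->]].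
exists (mk (Some p.1)), (mk (Some p.2)); exact/clause_two.
Qed.

Lemma matchF : match_set (formula_sem F) MK.
Proof.
rewrite /formula_sem /F /MK; split.
- move=> P /In_map [s [/In_map [r [hr ->]] ->]].
  exists (rb r); split; [apply/In_map; by exists r | exact: mkst_sem].
- move=> b /In_map [r [hr ->]]; exists (statement_sem (mkst r)); split; last exact: mkst_sem.
  apply/In_map; exists (mkst r); split=> //; apply/In_map; by exists r.
Qed.

Lemma subb_refl b : subb b b.
Proof. by apply: all_domI => a; apply: all_domI => c; case: (b a c). Qed.

Lemma inNK i : i < 6 -> List.In (rb (nth [::] Np i)) NK.
Proof. move=> h; apply/In_map; exists (nth [::] Np i); split=> //; exact: nth_In. Qed.

Lemma wordsMM : wordsOK MK MK.
Proof.
move=> b' h; exists b', [::]; split=> //; split=> //=.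
by rewrite /eqvb subb_refl.
Qed.

Lemma wordsNM : wordsOK NK MK.
Proof.
move=> b' /=.
case=> [<-|[<-|[<-|[<-|[<-|[<-|[]]]]]]].
- exists (rb (nth [::] Np 2)), [:: rb (nth [::] Np 4); rb (nth [::] Np 5)]; split; first exact: inNK.
  split; last by vm_compute.
  by move=> k [<-|[<-|[]]]; apply: inNK.
- exists (rb (nth [::] Np 1)), [::]; split; first exact: inNK.
  split; last by vm_compute. by [].
- exists (rb (nth [::] Np 2)), [::]; split; first exact: inNK.
  split; last by vm_compute. by [].
- exists (rb (nth [::] Np 3)), [::]; split; first exact: inNK.
  split; last by vm_compute. by [].
- exists (rb (nth [::] Np 4)), [::]; split; first exact: inNK.
  split; last by vm_compute. by [].
- exists (rb (nth [::] Np 1)), [:: rb (nth [::] Np 4); rb (nth [::] Np 5)]; split; first exact: inNK.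
  split; last by vm_compute.
  by move=> k [<-|[<-|[]]]; apply: inNK.
Qed.

Definition Good (L : sform tx) := match_set L MK \/ match_set L NK.

Lemma stepT L : Good L -> (exists G, T_step L G) /\ forall G, T_step L G -> Good G.
Proof.
case=> m.
- have [h1 h2] := T_lemma m (ltac:(by vm_compute) : coverb MK MK) (ltac:(by vm_compute) : closb MK MK)
    wordsMM (ltac:(by vm_compute) : antib MK) (ltac:(by vm_compute) : santib MK).
  split=> // G hG; left; exact: h2.
- have [h1 h2] := T_lemma m (ltac:(by vm_compute) : coverb NK MK) (ltac:(by vm_compute) : closb NK MK)
    wordsNM (ltac:(by vm_compute) : antib MK) (ltac:(by vm_compute) : santib MK).
  split=> // G hG; left; exact: h2.
Qed.

Lemma stepS L : Good L -> (exists G, S_step L G) /\ forall G, S_step L G -> match_set G NK.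
Proof.
case=> m.
- apply: (S_lemma (m := 2) m).
  + by vm_compute.
  + by case=> [|[|n]] //; vm_compute.
  + by vm_compute.
  + by vm_compute.
  + by vm_compute.
  + by vm_compute.
- apply: (S_lemma (m := 0) m) => //; by vm_compute.
Qed.

Lemma main_ind X : forall L, Good L ->
  (exists G, outcome (X ++ [:: OpS]) L G) /\
  (forall G, outcome (X ++ [:: OpS]) L G -> match_set G NK).
Proof.
elim: X => [|o X IH] L hL /=.
- have [[G hG] h2] := stepS hL; split; first by exists G, G.
  by move=> G' [M [hM ->]]; apply: h2.
- have [[M hM] h2] : (exists M, op_step o L M) /\ forall M, op_step o L M -> Good M.
    case: o => /=; first exact: stepT.
    have [h1 h2] := stepS hL; split=> // G hG; right; exact: h2.
  split.
  + case: (IH M (h2 M hM)) => [[G hG] _]; exists G, M; split=> //.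
  + move=> G [M' [hM' hG]]; exact: (proj2 (IH M' (h2 M' hM')) G hG).
Qed.

Lemma hasI T (p : T -> bool) s x : List.In x s -> p x -> has p s.
Proof. elim: s => [|a s IH] //= [->|h] hp; [by rewrite hp | by rewrite IH ?orbT]. Qed.

Lemma induced_match (G : sform tx) K x y : match_set G K ->
  (induced G x y <-> has (fun b => b (x ord0) (y ord0)) K).
Proof.
move=> [m1 m2]; split.
- case=> P [hP h]; case: (m1 P hP) => b [hb e].
  apply: (hasI hb); exact: (proj1 (e x y) h).
- case/hasIn => b [hb h]; case: (m2 b hb) => P [hP e].
  exists P; split=> //; exact: (proj2 (e x y) h).
Qed.

Lemma nontrans (G : sform tx) : match_set G NK -> ~ rtransitive (strict_part (induced G)).
Proof.
move=> m H.
pose a := mk (Some eC); pose b := mk (Some eA); pose c := mk (Some eB).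
have iab : induced G a b by apply/(induced_match _ _ m); vm_compute.
have nba : ~ induced G b a by move/(induced_match _ _ m); vm_compute.
have ibc : induced G b c by apply/(induced_match _ _ m); vm_compute.
have ncb : ~ induced G c b by move/(induced_match _ _ m); vm_compute.
have ica : induced G c a by apply/(induced_match _ _ m); vm_compute.
have [_ h] := H a b c (conj iab nba) (conj ibc ncb).
exact: h ica.
Qed.

Theorem mainTheorem8 :
  forall X : list op,
    exists (d : nat) (tax : 'I_d -> Taxonomy) (F : formula tax),
      wf_formula F /\
      (exists G, outcome (X ++ [:: OpS]) (formula_sem F) G) /\
      (forall G, outcome (X ++ [:: OpS]) (formula_sem F) G ->
                 ~ rtransitive (strict_part (induced G))).
Proof.
move=> X; exists 1, tx, F; split; first exact: wfF.
have [h1 h2] := main_ind X (or_introl matchF).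
split=> // G hG; exact: nontrans (h2 G hG).
Qed.
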